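(* Let $A$ be a finite set with $|A|\ge 2$ and $n\ge 2$. Then $\mathrm{Alt}(A^n)$ is not fast: there exists $g\in\mathrm{Alt}(A^n)$ with $\mathcal{L}(g,\mathrm{Alt}(A^n)\cap\mathcal{I})\ne\mathcal{L}(g,\mathcal{I})$.
   Context: Any $f\in\mathrm{Sym}(A^n)$ is written $f(x)=(f_1(x),\ldots,f_n(x))$ with coordinate functions $f_i:A^n\to A$; the $i$-th coordinate function is trivial if $f_i(x)=x_i$ for all $x$. An instruction is a permutation of $A^n$ with at most one nontrivial coordinate function (the identity counts as an instruction); $\mathcal{I}$ denotes the set of all instructions. For a set $\mathcal{J}\subseteq\mathcal{I}$ and $g\in\mathrm{Sym}(A^n)$, $\mathcal{L}(g,\mathcal{J})$ is the smallest $L$ such that $g=g^{(L)}\circ\cdots\circ g^{(1)}$ with all $g^{(k)}\in\mathcal{J}$ (taken to be $\infty$ if no such expression exists). A subgroup $K\le\mathrm{Sym}(A^n)$ is called fast if $\mathcal{L}(g,K\cap\mathcal{I})=\mathcal{L}(g,\mathcal{I})$ for all $g\in K$. *)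

(* Defs.v *)
From mathcomp Require Import all_boot all_order all_fingroup all_solvable.
From Stdlib Require Import ClassicalEpsilon.
Set Implicit Arguments. Unset Strict Implicit. Unset Printing Implicit Defensive.

Definition hcube (A : finType) (n : nat) : finType := {ffun 'I_n -> A}.

Definition nontriv_coords (A : finType) (n : nat) (f : {perm (hcube A n)}) : {set 'I_n} :=
  [set i : 'I_n | [exists x : hcube A n, f x i != x i]].

Definition instructions (A : finType) (n : nat) : {set {perm (hcube A n)}} :=
  [set f | #|nontriv_coords f| <= 1].

(* g = g^(L) o ... o g^(1) with all g^(k) in J.  In MathComp, (s * t) x = t (s x),
   so the composition g^(L) o ... o g^(1) is the product g^(1) * ... * g^(L). *)
Definition expressible (T : finType) (J : {set {perm T}}) (g : {perm T}) (L : nat) : bool :=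
  [exists t : L.-tuple {perm T},
     all (fun h => h \in J) t && (g == \prod_(h <- t) h)%g].

(* L(g, J): Some L for the smallest such L, None standing for infinity *)
Definition Lcost (T : finType) (J : {set {perm T}}) (g : {perm T}) : option nat :=
  match excluded_middle_informative (exists L, expressible J g L) with
  | left H => Some (ex_minn H)
  | right _ => None
  end.

(* Main.v *)
Require Import Defs.
From mathcomp Require Import all_boot all_order all_fingroup all_solvable.
From Stdlib Require Import ClassicalEpsilon.
Set Implicit Arguments. Unset Strict Implicit. Unset Printing Implicit Defensive.

Lemma inst_coord (A : finType) n (h : {perm hcube A n}) (d : 'I_n) :
  h \in instructions A n -> exists i, forall x k, k != i -> h x k = x k.
Proof.
rewrite inE => H.
have mem : forall x k, h x k != x k -> k \in nontriv_coords h.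
  by move=> x k Hk; rewrite inE; apply/existsP; exists x.
case: (set_0Vmem (nontriv_coords h)) => [E|[i Hi]].
  exists d => x k _; apply/eqP; apply/negPn/negP => /mem; by rewrite E inE.
exists i => x k Hki; apply/eqP; apply/negPn/negP => /mem Hk.
have : #|[set i; k]| <= #|nontriv_coords h|.
  by apply: subset_leq_card; apply/subsetP => y; rewrite in_set2 => /orP[]/eqP->.
by rewrite cards2 eq_sym Hki; move/leq_trans/(_ H).
Qed.

Lemma inst_of (A : finType) n (h : {perm hcube A n}) (i : 'I_n) :
  (forall x k, k != i -> h x k = x k) -> h \in instructions A n.
Proof.
move=> H; rewrite inE; apply: leq_trans (_ : #|[set i]| <= 1); last by rewrite cards1.
apply: subset_leq_card; apply/subsetP => k; rewrite !inE => /existsP[x Hx].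
by case: eqP => // /eqP Hk; rewrite H ?eqxx in Hx.
Qed.

Lemma two_coords (A : finType) n (h1 h2 : {perm hcube A n}) (i j : 'I_n) x k :
  (forall x k, k != i -> h1 x k = x k) -> (forall x k, k != j -> h2 x k = x k) ->
  (h1 * h2)%g x k != x k -> k = i \/ k = j.
Proof.
move=> H1 H2; rewrite permM.
case: (eqVneq k i) => [->|Hi]; first by left.
case: (eqVneq k j) => [->|Hj]; first by right.
by rewrite H2 // H1 // eqxx.
Qed.

Lemma first_det (A : finType) n (h1 h2 : {perm hcube A n}) (i j : 'I_n) x :
  (forall x k, k != i -> h1 x k = x k) -> (forall x k, k != j -> h2 x k = x k) ->
  i != j -> h1 x = [ffun k => if k == i then (h1 * h2)%g x i else x k].
Proof.
move=> H1 H2 Hij; apply/ffunP => k; rewrite ffunE.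
case: (eqVneq k i) => [->|Hk]; last by rewrite H1.
by rewrite permM H2.
Qed.

Theorem proposition3 (A : finType) (n : nat) :
  2 <= #|A| -> 2 <= n ->
  exists g : {perm (hcube A n)},
    g \in Alt (hcube A n) /\
    Lcost (Alt (hcube A n) :&: instructions A n) g <> Lcost (instructions A n) g.
Proof.
move=> HA Hn.
case/card_gt1P: HA => a0 [a1 [_ _ Ha]].
pose i0 : 'I_n := Ordinal (ltnW Hn).
pose i1 : 'I_n := Ordinal Hn.
have i01 : (i0 == i1) = false by [].
have i10 : (i1 == i0) = false by [].
pose a : hcube A n := [ffun _ => a0].
pose b : hcube A n := [ffun k => if k == i0 then a1 else a0].
pose c : hcube A n := [ffun k => if (k == i0) || (k == i1) then a1 else a0].
have Ha' : (a1 == a0) = false by rewrite eq_sym (negbTE Ha).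
have ab : a != b by apply/eqP => /ffunP/(_ i0); rewrite !ffunE eqxx => /eqP; rewrite (negbTE Ha).
have bc : b != c by apply/eqP => /ffunP/(_ i1); rewrite !ffunE i10 eqxx /= => /eqP; rewrite (negbTE Ha).
have ac : a != c by apply/eqP => /ffunP/(_ i0); rewrite !ffunE eqxx => /eqP; rewrite (negbTE Ha).
pose g := (tperm a b * tperm b c)%g.
have gE : forall x, g x = tperm b c (tperm a b x) by move=> x; rewrite permM.
have ga : g a = c by rewrite gE tpermL tpermL.
have gb : g b = a by rewrite gE tpermR tpermD // eq_sym.
have gc : g c = b by rewrite gE (tpermD (ac) (bc)) tpermR.
have gx : forall x, x != a -> x != b -> x != c -> g x = x.
  by move=> x xa xb xc; rewrite gE (tpermD (T:=hcube A n) (z:=x)) 1?eq_sym // (tpermD (T:=hcube A n) (z:=x)) 1?eq_sym.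
exists g; split.
  by rewrite Alt_even odd_permM !odd_tperm ab bc.
have Iab : tperm a b \in instructions A n.
  apply: (inst_of (i:=i0)) => x k Hk.
  case: tpermP => [->|->|//]; rewrite !ffunE ?(negbTE Hk) //.
have Ibc : tperm b c \in instructions A n.
  apply: (inst_of (i:=i1)) => x k Hk.
  case: tpermP => [->|->|//]; rewrite !ffunE ?(negbTE Hk) ?orbF //.
have HexI : expressible (instructions A n) g 2.
  apply/existsP; exists [tuple tperm a b; tperm b c].
  by rewrite /= Iab Ibc /= !big_cons big_nil mulg1 eqxx.
have Hno : forall m, m <= 2 -> ~~ expressible (Alt (hcube A n) :&: instructions A n) g m.
  case=> [|[|[|m]]] // _; apply/existsP => -[[s Hs] /andP[/= Hall /eqP Hg]];
    case: s Hs Hall Hg => [|h1 [|h2 [|? ?]]] //= _.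
  - move=> _; rewrite big_nil => Hg1.
    by move: ga; rewrite Hg1 perm1 => /eqP; rewrite (negbTE ac).
  - rewrite andbT big_cons big_nil mulg1 => /setIP[_ /(inst_coord i0)[i Hi]] Hg1.
    have e0 : i0 = i.
      case: (eqVneq i0 i) => // Hk; move: (Hi a i0 Hk).
      by rewrite -Hg1 ga !ffunE eqxx /= => /eqP; rewrite Ha'.
    have e1 : i1 = i.
      case: (eqVneq i1 i) => // Hk; move: (Hi a i1 Hk).
      by rewrite -Hg1 ga !ffunE eqxx orbT /= => /eqP; rewrite Ha'.
    by move: i01; rewrite e0 e1 eqxx.
  - rewrite andbT big_cons big_cons big_nil mulg1.
    move=> /andP[/setIP[Alt1 /(inst_coord i0)[i H1]] /setIP[_ /(inst_coord i0)[j H2]]] Hg1.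
    have c0 : i0 = i \/ i0 = j.
      apply: (two_coords (x:=a) H1 H2); rewrite -Hg1 ga !ffunE eqxx /=; by rewrite Ha'.
    have c1 : i1 = i \/ i1 = j.
      apply: (two_coords (x:=a) H1 H2); rewrite -Hg1 ga !ffunE eqxx orbT /=; by rewrite Ha'.
    case: c0 => e0; case: c1 => e1; subst.
    + by move: i01; rewrite e1 eqxx.
    + have Hij : i0 != i1 by rewrite i01.
      have D := fun x => @first_det _ _ _ _ _ _ x H1 H2 Hij.
      have Eh : h1 = tperm a b.
        apply/permP => x; rewrite D -Hg1.
        case: (eqVneq x a) => [->|xa].
          by rewrite ga tpermL; apply/ffunP => k; rewrite !ffunE eqxx.
        case: (eqVneq x b) => [->|xb].
          rewrite gb tpermR; apply/ffunP => k; rewrite !ffunE.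
          by case: (k =P i0).
        case: (eqVneq x c) => [->|xc].
          rewrite gc (tpermD ac bc); apply/ffunP => k; rewrite !ffunE.
          by case: (k =P i0) => [->|] //=; rewrite eqxx.
        rewrite gx // (tpermD (T:=hcube A n) (z:=x)) 1?eq_sym //.
        by apply/ffunP => k; rewrite !ffunE; case: (k =P i0) => [->|].
      by move: Alt1; rewrite Eh Alt_even odd_tperm ab.
    + have Hij : i1 != i0 by rewrite i10.
      have D := fun x => @first_det _ _ _ _ _ _ x H1 H2 Hij.
      have : h1 c = h1 b.
        rewrite !D -Hg1 gc gb; apply/ffunP => k; rewrite !ffunE.
        by rewrite i10; case: (k =P i1); rewrite ?orbF.
      by move/perm_inj/eqP; rewrite eq_sym (negbTE bc).
    + by move: i01; rewrite e1 eqxx.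
rewrite /Lcost.
case: excluded_middle_informative => [HJ|HJ]; case: excluded_middle_informative => [HI|HI] //; last by case: HI; exists 2.
move=> [E]; move: E; case: (ex_minnP HI) => m HmI Hmin; case: (ex_minnP HJ) => m' HmJ _ E.
subst m'; by move: (Hno m (Hmin 2 HexI)); rewrite HmJ.
Qed.
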